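(* Let $G=\langle A\mid R\rangle$ be a finitely presented group ($A$, $R$ finite) with Dehn function $D$, and suppose $G\in\mathcal{B}_f$ for some function $f\in\mathfrak{F}$ that is not identically zero. Let $p,q\in\mathfrak{F}$ satisfy $p\preceq D\preceq q$. Then there exist constants $C,K,M,N$ such that $p(n)\le C n^2 q(Kf(Mn))$ for all $n\ge N$. In particular, if $p=q=n^d$ for some $d>2$, then $n^{(d-2)/d}\preceq f$; and if $p=q=\mathfrak{e}$, then $\mathfrak{i}\preceq f$.
   Context: The Dehn function of $G=\langle A\mid R\rangle$ is $D(n)=\max\{\mathrm{Area}(w): w\in S^*, |w|\le n, \pi(w)=e\}$, where $S=A\cup A^{-1}$ and $\mathrm{Area}(w)$ is the least $k$ such that $w=\prod_{i=1}^k v_i r_i^{\pm1}v_i^{-1}$ in the free group $F(A)$ with $r_i\in R$. $\mathfrak{i}(n)=n$ and $\mathfrak{e}(n)=\exp(n)$. Convolution: for $w_1,\dots,w_k\in\Sigma^*$, $w_1\otimes\cdots\otimes w_k$ is the string over $(\Sigma\cup\{\diamond\})^k$ obtained by padding the shorter strings with a new symbol $\diamond$ and reading them in parallel; a relation is FA-recognizable if the set of convolutions of its tuples is regular. $\pi:S^*\to G$ is the canonical evaluation map, $d_A$ the word metric of $\Gamma(G,A)$. A Cayley automatic representation of $G$ is a bijection $\psi:L\to G$ from a regular language $L\subseteq S^*$ such that for every $a\in A$ the relation $\{(\psi^{-1}(g),\psi^{-1}(ga)) : g\in G\}$ is FA-recognizable; its function is $h(n)=\max\{d_A(\pi(w),\psi(w))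 : w\in L, |w|\le n\}$. $\mathfrak{F}$ is the set of nondecreasing functions from some interval $[Q,\infty)\cap\mathbb{N}$ to the nonnegative reals; $g\preceq f$ means there exist $N\ge0$ and positive integers $K,M$ with $g(n)\le Kf(Mn)$ for all $n\ge N$. $G\in\mathcal{B}_f$ means $G$ admits a Cayley automatic representation with $h\preceq f$ (independent of the finite generating set). *)

(* Defs.v *)
From Stdlib Require Import Reals Relations.Relation_Operators.
From HB Require Import structures.
From mathcomp Require Import all_boot.
Set Implicit Arguments.
Unset Strict Implicit.
Unset Printing Implicit Defensive.

(* Letters of S = A ∪ A^{-1}: (a, true) is the generator a, (a, false) is a^{-1}. *)
Notation word A := (seq (A * bool)%type).

Definition linv (A : finType) (x : A * bool) : A * bool := (x.1, ~~ x.2).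
Definition winv (A : finType) (w : word A) : word A := rev (map (@linv A) w).

Inductive free_step (A : finType) : word A -> word A -> Prop :=
  | fs_intro (u v : word A) (x : A * bool) :
      free_step (u ++ x :: linv x :: v) (u ++ v).

Definition free_eq (A : finType) : word A -> word A -> Prop :=
  clos_refl_sym_trans (word A) (@free_step A).

Definition conj_rel (A : finType) (t : word A * word A * bool) : word A :=
  let: (v, r, e) := t in v ++ (if e then r else winv r) ++ winv v.

Definition area_le (A : finType) (rels : seq (word A)) (w : word A) (k : nat) : Prop :=
  exists ts : seq (word A * word A * bool),
    size ts <= k /\ (forall t, t \in ts -> t.1.2 \in rels) /\
    free_eq w (flatten (map (@conj_rel A) ts)).

Definition gtrivial (A : finType) (rels : seq (word A)) (w : word A) : Prop :=
  exists k, area_le rels w k.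

Definition geq (A : finType) (rels : seq (word A)) (w v : word A) : Prop :=
  gtrivial rels (w ++ winv v).

(* D is the Dehn function of <A | rels>:
   D(n) = max { Area(w) : |w| <= n, pi(w) = e }  (written out: D n is the
   least k bounding the area of every null-homotopic word of length <= n). *)
Definition is_dehn_function (A : finType) (rels : seq (word A)) (D : nat -> nat) : Prop :=
  forall n,
    (forall w : word A, size w <= n -> gtrivial rels w -> area_le rels w (D n)) /\
    (forall k, (forall w : word A, size w <= n -> gtrivial rels w -> area_le rels w k) ->
               D n <= k).

Definition regular (S : finType) (L : seq S -> Prop) : Prop :=
  exists (Q : finType) (q0 : Q) (d : Q -> S -> Q) (F : pred Q),
    forall w, L w <-> F (foldl d q0 w).

(* Convolution u ⊗ v; None plays the role of the padding symbol ⋄. *)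
Definition conv (S : finType) (u v : seq S) : seq (option S * option S) :=
  mkseq (fun i => (onth u i, onth v i)) (maxn (size u) (size v)).

(* A Cayley automatic representation psi : L -> G.  Group elements are
   represented by words (psi w is a word whose image in G is psi(w)). *)
Definition cayley_automatic (A : finType) (rels : seq (word A))
    (L : word A -> Prop) (psi : word A -> word A) : Prop :=
  regular L /\
  (forall w1 w2, L w1 -> L w2 -> geq rels (psi w1) (psi w2) -> w1 = w2) /\
  (forall g : word A, exists w, L w /\ geq rels (psi w) g) /\
  (forall a : A,
     regular (fun c => exists u v, L u /\ L v /\
                 geq rels (psi v) (psi u ++ [:: (a, true)]) /\ c = conv u v)).

Definition preceq (g f : nat -> R) : Prop :=
  exists N K M : nat, (0 < K)%N /\ (0 < M)%N /\
    forall n, (N <= n)%N -> Rle (g n) (Rmult (INR K) (f (M * n))).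

(* f ∈ 𝔉 with domain [Q, ∞) ∩ ℕ (values below Q are irrelevant). *)
Definition inF (Q : nat) (f : nat -> R) : Prop :=
  (forall n m, (Q <= n)%N -> (n <= m)%N -> Rle (f n) (f m)) /\
  (forall n, (Q <= n)%N -> Rle R0 (f n)).

(* G ∈ B_f: some Cayley automatic representation has h ⪯ f, where
   h(n) = max { d_A(pi(w), psi(w)) : w ∈ L, |w| <= n }  (written out:
   h(n) <= K f(Mn) iff every such w has a connecting word u, pi(w u) = psi(w),
   with |u| <= K f(Mn)). *)
Definition in_B (A : finType) (rels : seq (word A)) (f : nat -> R) : Prop :=
  exists (L : word A -> Prop) (psi : word A -> word A),
    cayley_automatic rels L psi /\
    exists N K M : nat, (0 < K)%N /\ (0 < M)%N /\
      forall n (w : word A), (N <= n)%N -> L w -> (size w <= n)%N ->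
        exists u : word A, geq rels (w ++ u) (psi w) /\
          Rle (INR (size u)) (Rmult (INR K) (f (M * n))).

(* Main.v *)
Require Import Defs.
From Stdlib Require Import Reals Lra ZArith Relations.Relation_Operators.
From HB Require Import structures.
From mathcomp Require Import all_boot zify.
Set Implicit Arguments.
Unset Strict Implicit.
Unset Printing Implicit Defensive.

Open Scope nat_scope.

Section Words.
Variable A : finType.
Variable rels : seq (word A).
Local Notation geqw := (@Defs.geq A rels).

Lemma linvK (x : A * bool) : linv (linv x) = x.
Proof. by case: x => a b; rewrite /linv /= negbK. Qed.

Lemma winv_cat (u v : word A) : winv (u ++ v) = winv v ++ winv u.
Proof. by rewrite /winv map_cat rev_cat. Qed.

Lemma winvK (u : word A) : winv (winv u) = u.
Proof. by rewrite /winv map_rev revK -map_comp (eq_map (@linvK)) map_id. Qed.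

Lemma winv_nil : winv ([::] : word A) = [::]. Proof. by []. Qed.

Lemma size_winv (u : word A) : size (winv u) = size u.
Proof. by rewrite /winv size_rev size_map. Qed.

Lemma winv1 (x : A * bool) : winv [:: x] = [:: linv x]. Proof. by []. Qed.

Lemma fe_refl (u : word A) : free_eq u u. Proof. exact: rst_refl. Qed.
Lemma fe_sym (u v : word A) : free_eq u v -> free_eq v u. Proof. exact: rst_sym. Qed.
Lemma fe_trans (u v w : word A) : free_eq u v -> free_eq v w -> free_eq u w.
Proof. exact: rst_trans. Qed.

Lemma fe_cat_gen (x y u v : word A) : free_eq u v -> free_eq (x ++ u ++ y) (x ++ v ++ y).
Proof.
elim=> [a b st| a|a b _ IH|a b c _ IH1 _ IH2].
- apply: rst_step; case: st => u0 v0 z.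
  have -> : x ++ (u0 ++ [:: z, linv z & v0]) ++ y = (x ++ u0) ++ [:: z, linv z & v0 ++ y].
    by rewrite -!catA.
  have -> : x ++ (u0 ++ v0) ++ y = (x ++ u0) ++ (v0 ++ y) by rewrite -!catA.
  exact: fs_intro.
- exact: fe_refl.
- exact: fe_sym.
- exact: fe_trans IH2.
Qed.

Lemma fe_catl (x u v : word A) : free_eq u v -> free_eq (x ++ u) (x ++ v).
Proof. by move=> h; have := fe_cat_gen x [::] h; rewrite !cats0. Qed.
Lemma fe_catr (y u v : word A) : free_eq u v -> free_eq (u ++ y) (v ++ y).
Proof. by move=> h; exact: (fe_cat_gen [::] y h). Qed.
Lemma fe_cat (u v u' v' : word A) : free_eq u u' -> free_eq v v' -> free_eq (u ++ v) (u' ++ v').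
Proof. move=> h1 h2; apply: fe_trans (fe_catr _ h1) (fe_catl _ h2). Qed.

Lemma fe_winv (u v : word A) : free_eq u v -> free_eq (winv u) (winv v).
Proof.
elim=> [a b st| a|a b _ IH|a b c _ IH1 _ IH2].
- apply: rst_step; case: st => u0 v0 z.
  rewrite !winv_cat /winv /= rev_cons rev_cons -!cats1 -!catA /= linvK.
  exact: (@fs_intro _ (rev (map (@linv A) v0)) (rev (map (@linv A) u0)) z).
- exact: fe_refl.
- exact: fe_sym.
- exact: fe_trans IH2.
Qed.

Lemma fe_invr (u : word A) : free_eq (u ++ winv u) [::].
Proof.
elim: u => [|x u IH] /=; first exact: fe_refl.
rewrite /winv /= rev_cons -cats1 -/(winv u).
have -> : x :: u ++ winv u ++ [:: linv x] = [:: x] ++ (u ++ winv u) ++ [:: linv x] by rewrite catA.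
apply: fe_trans (fe_cat_gen [:: x] [:: linv x] IH) _ => /=.
apply: rst_step; exact: (@fs_intro _ [::] [::] x).
Qed.

Lemma fe_invl (u : word A) : free_eq (winv u ++ u) [::].
Proof. by have := fe_invr (winv u); rewrite winvK. Qed.

Lemma fe_ins (x y u : word A) : free_eq (x ++ y) (x ++ u ++ winv u ++ y).
Proof.
have := fe_cat_gen x y (fe_invr u); rewrite /= -!catA => h; exact: fe_sym.
Qed.

Lemma area_fe (w w' : word A) k : free_eq w w' -> area_le rels w k -> area_le rels w' k.
Proof.
move=> h [ts [hs [hr hf]]]; exists ts; split=> //; split=> //.
exact: fe_trans (fe_sym h) hf.
Qed.

Lemma area_mono (w : word A) k k' : k <= k' -> area_le rels w k -> area_le rels w k'.
Proof. move=> hk [ts [hs hr]]; exists ts; split=> //; exact: leq_trans hk. Qed.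

Lemma area_nil k : area_le rels [::] k.
Proof. exists [::]; split=> //; split=> //; exact: fe_refl. Qed.

Lemma area_cat (u v : word A) k1 k2 :
  area_le rels u k1 -> area_le rels v k2 -> area_le rels (u ++ v) (k1 + k2).
Proof.
move=> [t1 [s1 [r1 f1]]] [t2 [s2 [r2 f2]]]; exists (t1 ++ t2); split.
  by rewrite size_cat leq_add.
split; first by move=> t; rewrite mem_cat => /orP[]; [apply: r1|apply: r2].
by rewrite map_cat flatten_cat; exact: fe_cat.
Qed.

Definition conjt (x : word A) (t : word A * word A * bool) : word A * word A * bool :=
  let: (v, r, e) := t in (x ++ v, r, e).

Lemma area_conj (x w : word A) k :
  area_le rels w k -> area_le rels (x ++ w ++ winv x) k.
Proof.
move=> [ts [hs [hr hf]]]; exists (map (conjt x) ts); split; first by rewrite size_map.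
split.
  move=> t /mapP [[[v r] e] ht ->] /=; exact: (hr _ ht).
apply: fe_trans (fe_catl x (fe_catr (winv x) hf)) _.
elim: ts {hs hr hf} => [|[[v r] e] ts IH] /=.
  exact: fe_invr.
rewrite winv_cat -!catA; do 4 apply: fe_catl.
apply: fe_trans (fe_catr (flatten [seq conj_rel i | i <- ts] ++ winv x) (fe_sym (fe_invl x))) _.
by rewrite /= -catA; apply: fe_catl.
Qed.

Definition flipt (t : word A * word A * bool) : word A * word A * bool :=
  let: (v, r, e) := t in (v, r, ~~ e).

Lemma area_inv (w : word A) k : area_le rels w k -> area_le rels (winv w) k.
Proof.
move=> [ts [hs [hr hf]]]; exists (rev (map flipt ts)); split.
  by rewrite size_rev size_map.
split.
  move=> t; rewrite mem_rev => /mapP [[[v r] e] ht ->] /=; exact: (hr _ ht).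
apply: fe_trans (fe_winv hf) _.
elim: ts {hs hr hf} => [|[[v r] e] ts IH] /=; first exact: fe_refl.
rewrite winv_cat rev_cons -cats1 map_cat flatten_cat /= cats0.
apply: fe_cat => //.
rewrite !winv_cat winvK -catA; apply: fe_catl; apply: fe_catr.
by case: e => /=; rewrite ?winvK; exact: fe_refl.
Qed.

Definition aeq k (a b : word A) := area_le rels (a ++ winv b) k.

Lemma aeq_refl k a : aeq k a a.
Proof. apply: area_fe (fe_sym (fe_invr a)) (area_nil k). Qed.

Lemma aeq_sym k a b : aeq k a b -> aeq k b a.
Proof. by move=> /area_inv; rewrite /aeq winv_cat winvK. Qed.

Lemma aeq_trans k1 k2 a b c : aeq k1 a b -> aeq k2 b c -> aeq (k1 + k2) a c.
Proof.
move=> h1 h2; have := area_cat h1 h2; apply: area_fe.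
rewrite -catA; apply: fe_catl; rewrite catA; apply: fe_trans (fe_catr _ (fe_invl b)) _.
exact: fe_refl.
Qed.

Lemma aeq_mono k k' a b : k <= k' -> aeq k a b -> aeq k' a b.
Proof. exact: area_mono. Qed.

Lemma aeq_catl k x a b : aeq k a b -> aeq k (x ++ a) (x ++ b).
Proof.
move=> /(area_conj x); rewrite /aeq winv_cat -!catA; exact: id.
Qed.

Lemma aeq_catr k y a b : aeq k a b -> aeq k (a ++ y) (b ++ y).
Proof.
move=> h; apply: area_fe h; rewrite /aeq winv_cat -catA.
exact: fe_ins.
Qed.

Lemma aeq_fel k a a' b : free_eq a a' -> aeq k a b -> aeq k a' b.
Proof. by move=> h; apply: area_fe; apply: fe_catr. Qed.

Lemma aeq_fer k a b b' : free_eq b b' -> aeq k a b -> aeq k a b'.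
Proof. by move=> h; apply: area_fe; apply: fe_catl; apply: fe_winv. Qed.

Lemma aeq_nil k w : aeq k w [::] <-> area_le rels w k.
Proof. by rewrite /aeq cats0. Qed.

Lemma geqE a b : geqw a b <-> exists k, aeq k a b.
Proof. by []. Qed.

Lemma geq_refl a : geqw a a. Proof. by exists 0; apply: aeq_refl. Qed.
Lemma geq_sym a b : geqw a b -> geqw b a.
Proof. by move=> [k h]; exists k; apply: aeq_sym. Qed.
Lemma geq_trans a b c : geqw a b -> geqw b c -> geqw a c.
Proof. move=> [k h] [k' h']; exists (k + k'); exact: aeq_trans h h'. Qed.
Lemma geq_catl x a b : geqw a b -> geqw (x ++ a) (x ++ b).
Proof. by move=> [k h]; exists k; apply: aeq_catl. Qed.
Lemma geq_catr y a b : geqw a b -> geqw (a ++ y) (b ++ y).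
Proof. by move=> [k h]; exists k; apply: aeq_catr. Qed.
Lemma geq_fe a b : free_eq a b -> geqw a b.
Proof. by move=> h; exists 0; apply: aeq_fer h (aeq_refl _ _). Qed.
Lemma geq_cat a b a' b' : geqw a a' -> geqw b b' -> geqw (a ++ b) (a' ++ b').
Proof. move=> h1 h2; apply: geq_trans (geq_catr _ h1) (geq_catl _ h2). Qed.
Lemma geq_cancell x a b : geqw (x ++ a) (x ++ b) -> geqw a b.
Proof.
move=> /(geq_catl (winv x)); rewrite !catA => h.
apply: geq_trans (geq_trans (geq_fe (fe_sym (fe_catr a (fe_invl x)))) h) _.
exact: geq_fe (fe_catr b (fe_invl x)).
Qed.
Lemma geq_cancelr y a b : geqw (a ++ y) (b ++ y) -> geqw a b.
Proof.
move=> /(geq_catr (winv y)); rewrite -!catA => h.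
have e1 := fe_catl a (fe_invr y); have e2 := fe_catl b (fe_invr y).
rewrite !cats0 in e1 e2.
exact: geq_trans (geq_trans (geq_fe (fe_sym e1)) h) (geq_fe e2).
Qed.

End Words.

Open Scope nat_scope.

Section Onth.
Variable T : Type.
Lemma onth_take (s : seq T) i k : onth (take i s) k = if k < i then onth s k else None.
Proof.
elim: s i k => [|x s IH] [|i] [|k] //=; rewrite ?onth0n //.
  by case: ifP.
by rewrite IH.
Qed.
Lemma onth_drop (s : seq T) j k : onth (drop j s) k = onth s (j + k).
Proof. by elim: s j => [|x s IH] [|j] //=; rewrite onth0n. Qed.
Lemma onth_None (s : seq T) k : (onth s k = None) <-> size s <= k.
Proof.
split; first by move=> h; rewrite -onthNE h.
exact: onth_default.
Qed.
Lemma onth_Some (s : seq T) k : k < size s -> exists x, onth s k = Some x.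
Proof. move=> h; case E: (onth s k) => [x|]; first by exists x.
by move/onth_None: E; lia.
Qed.
End Onth.

Section Conv.
Variable S : finType.
Lemma size_conv (u v : seq S) : size (conv u v) = maxn (size u) (size v).
Proof. by rewrite size_mkseq. Qed.

Lemma onth_conv (u v : seq S) k :
  onth (conv u v) k = if k < maxn (size u) (size v) then Some (onth u k, onth v k) else None.
Proof.
case: ifP => h.
  by rewrite onthE (nth_map (None, None)) ?size_conv // nth_mkseq.
by apply/onth_None; rewrite size_conv; lia.
Qed.

Lemma conv_inj (u v u' v' : seq S) : conv u v = conv u' v' -> u = u' /\ v = v'.
Proof.
move=> h; have hs := size_conv u v; rewrite h size_conv in hs.
suff H : forall k, onth u k = onth u' k /\ onth v k = onth v' k.
  by split; apply: eq_from_onth => k; case: (H k).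
move=> k; have := onth_conv u v k; rewrite h onth_conv -hs.
case: ifP => hk; first by case.
move=> _; split; rewrite !onth_default //; lia.
Qed.

Definition swp (p : option S * option S) := (p.2, p.1).

Lemma conv_swap (u v : seq S) : conv v u = map swp (conv u v).
Proof.
apply: eq_from_onth => k; rewrite onth_map !onth_conv maxnC.
by case: ifP.
Qed.
End Conv.

Section Pump.
Variables (S Q : finType) (q0 : Q) (d : Q -> S -> Q).

Lemma pump (x : seq S) k : k + #|Q| < size x ->
  exists i j, [/\ k <= i, i < j, j <= k + #|Q| &
     foldl d q0 (take i x ++ drop j x) = foldl d q0 x].
Proof.
move=> hx.
set s := map (fun i => foldl d q0 (take i x)) (iota k (#|Q|).+1).
have : ~~ uniq s.
  apply/negP => /card_uniqP hu.
  have : #|s| <= #|Q| by apply: max_card.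
  by rewrite hu size_map size_iota; lia.
move/(uniqPn q0) => [i [j [hij hj]]].
rewrite size_map size_iota in hj.
rewrite !(nth_map 0) ?size_iota //; last lia.
rewrite !nth_iota //; last lia.
move=> heq; exists (k + i), (k + j); split; try lia.
by rewrite foldl_cat heq -foldl_cat cat_take_drop.
Qed.

Lemma complete (F : pred Q) (x : seq S) k : F (foldl d q0 x) ->
  exists z, size z <= #|Q| /\ F (foldl d q0 (take k x ++ z)).
Proof.
move: {2}(size x) (leqnn (size x)) => n; elim: n x => [|n IH] x hn hF.
  exists (drop k x); rewrite cat_take_drop size_drop; split=> //; lia.
case: (leqP (size x) (k + #|Q|)) => hs.
  exists (drop k x); rewrite cat_take_drop size_drop; split=> //; lia.
have [i [j [hki hij hj he]]] := pump hs.
have hsz : size (take i x ++ drop j x) <= n.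
  rewrite size_cat size_take size_drop; case: ifP; lia.
have hF' : F (foldl d q0 (take i x ++ drop j x)) by rewrite he.
have [z [hz hFz]] := IH _ hsz hF'; exists z; split=> //.
have hti : size (take i x) = i by rewrite size_takel //; lia.
move: hFz; rewrite take_cat hti; case: ifP => h1.
  by rewrite take_takel //; lia.
have -> : k = i by lia.
by rewrite subnn take0 cats0.
Qed.
End Pump.

Open Scope nat_scope.

Section ConvPrefix.
Variable S : finType.

Lemma take_min (T : Type) (u : seq T) t : take t u = take (minn t (size u)) u.
Proof.
case: (leqP t (size u)) => h //.
by rewrite !take_oversize // ltnW.
Qed.

Lemma prefix_conv1 (u v u' v' : seq S) t z :
  conv u' v' = take t (conv u v) ++ z ->
  exists ru, u' = take t u ++ ru /\ size ru <= size z.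
Proof.
move=> hy.
move: hy; set x := conv u v => hy.
have hsx : size x = maxn (size u) (size v) by rewrite size_conv.
have hsy : size (conv u' v') = minn t (size x) + size z.
  by rewrite hy size_cat size_take; case: ifP; lia.
rewrite size_conv in hsy.
have key : forall k, k < minn t (size x) -> onth u' k = onth u k.
  move=> k hk.
  have e1 : onth (conv u' v') k = onth x k.
    have hts : size (take t x) = minn t (size x) by rewrite size_take; case: ifP; lia.
    rewrite hy onth_cat hts hk onth_take ifT //; lia.
  move: e1; rewrite !onth_conv; case: ifP; case: ifP; try lia.
  by move=> _ _ [].
set m := minn t (size u).
have hm : m = minn t (size u) by [].
have htu : take t u = take m u by rewrite hm take_min.
have hm1 : forall k, k < m -> onth u' k = onth u k.
  move=> k hk; apply: key; lia.
have hmu' : m <= size u'.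
  case: (leqP m (size u')) => // hlt.
  have [y hy'] := @onth_Some _ u m.-1 ltac:(lia).
  have := hm1 m.-1 ltac:(lia); rewrite hy' onth_default //; lia.
have hsu' : size u' <= m + size z.
  have hmx := leq_maxl (size u') (size v').
  case: (leqP t (size u)) => htle.
    have e : m = t by rewrite hm; apply/minn_idPl.
    clear -hmx hsy e; lia.
  have e : m = size u by rewrite hm; apply/minn_idPr; exact: ltnW.
  case: (ltnP (size u) (size x)) => hux.
    have := key (size u) ltac:(clear -hux htle; lia).
    rewrite (@onth_default _ (size u) u) // => h.
    have := proj1 (onth_None _ _) h.
    clear -e; lia.
  clear -hmx hsy e hux; lia.
exists (drop m u'); split.
  rewrite htu; have -> : take m u = take m u'.
    apply: eq_from_onth => k; rewrite !onth_take; case: ifP => // hk.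
    by rewrite hm1.
  by rewrite cat_take_drop.
rewrite size_drop; lia.
Qed.

Lemma prefix_conv (u v u' v' : seq S) t z :
  conv u' v' = take t (conv u v) ++ z ->
  (exists ru, u' = take t u ++ ru /\ size ru <= size z) /\
  (exists rv, v' = take t v ++ rv /\ size rv <= size z).
Proof.
move=> hy; split; first exact: prefix_conv1 hy.
have hy' : conv v' u' = take t (conv v u) ++ map (@swp S) z.
  by rewrite (conv_swap u' v') (conv_swap u v) hy map_cat map_take.
have [rv [h1 h2]] := prefix_conv1 hy'; exists rv; split=> //.
by rewrite size_map in h2.
Qed.

Lemma remove_conv (u v : seq S) i j : size u <= i -> i < j -> j <= size v ->
  take i (conv u v) ++ drop j (conv u v) = conv u (take i v ++ drop j v).
Proof.
move=> hui hij hjv.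
have hsx : size (conv u v) = size v by rewrite size_conv; lia.
have hti : size (take i (conv u v)) = i by rewrite size_takel //; lia.
have htv : size (take i v) = i by rewrite size_takel //; lia.
apply: eq_from_onth => k; rewrite onth_cat hti onth_conv size_cat htv size_drop.
case: ifP => hk.
  rewrite onth_take hk onth_conv onth_cat htv hk onth_take hk.
  by case: ifP => ? ; case: ifP => ? //; lia.
rewrite onth_drop onth_conv onth_cat htv hk onth_drop.
rewrite (@onth_default _ k u); last lia.
rewrite (@onth_default _ (j + (k - i)) u); last lia.
by case: ifP => ? ; case: ifP => ? //; lia.
Qed.
End ConvPrefix.

Section Lang.
Variables (S : finType) (lang : seq (option S * option S) -> Prop).
Hypothesis hreg : regular lang.

Lemma regular_swap : regular (fun y => lang (map (@swp S) y)).
Proof.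
case: hreg => Q [q0 [d [F h]]].
exists Q, q0, (fun q s => d q (swp s)), F => w.
rewrite h; suff -> : foldl d q0 (map (@swp S) w) = foldl (fun q s => d q (swp s)) q0 w by [].
by elim: w (q0) => //= a w IH q; rewrite IH.
Qed.

Lemma lang_props : exists c,
  (forall u v, lang (conv u v) -> size u + c < size v ->
     exists v', size v' < size v /\ lang (conv u v')) /\
  (forall u v t, lang (conv u v) -> exists z, size z <= c /\ lang (take t (conv u v) ++ z)).
Proof.
case: hreg => Q [q0 [d [F h]]].
exists #|Q|; split.
  move=> u v hl hs.
  have hsx : size u + #|Q| < size (conv u v) by rewrite size_conv; lia.
  have [i [j [h1 h2 h3 he]]] := pump q0 d hsx.
  exists (take i v ++ drop j v); split.
    rewrite size_cat size_drop size_takel; lia.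
  rewrite -remove_conv //; try lia.
  by rewrite h he -h.
move=> u v t /h hF.
have [z [hz hFz]] := complete t hF.
by exists z; split=> //; apply/h.
Qed.
End Lang.

Open Scope nat_scope.

Section FT.
Variable A : finType.
Variable rels : seq (word A).
Local Notation geqw := (@Defs.geq A rels).
Variables (L : word A -> Prop) (psi : word A -> word A).
Hypothesis hinj : forall w1 w2, L w1 -> L w2 -> geqw (psi w1) (psi w2) -> w1 = w2.
Hypothesis hmul : forall a : A,
     regular (fun c => exists u v, L u /\ L v /\
                 geqw (psi v) (psi u ++ [:: (a, true)]) /\ c = conv u v).

Definition Rel a u v := L u /\ L v /\ geqw (psi v) (psi u ++ [:: (a, true)]).

Definition FT a c := forall u v, Rel a u v ->
  (size v <= size u + c /\ size u <= size v + c) /\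
  forall t, exists ru rv, Rel a (take t u ++ ru) (take t v ++ rv) /\ size ru <= c /\ size rv <= c.

Lemma FT_mono a c c' : c <= c' -> FT a c -> FT a c'.
Proof.
move=> hc h u v hr; have [[h1 h2] h3] := h u v hr; split; first by split; lia.
move=> t; have [ru [rv [h4 [h5 h6]]]] := h3 t; exists ru, rv; split=> //; split; lia.
Qed.

Lemma lang_conv a u v :
  (exists u' v', L u' /\ L v' /\ geqw (psi v') (psi u' ++ [:: (a, true)]) /\ conv u v = conv u' v')
  <-> Rel a u v.
Proof.
split.
  by move=> [u' [v' [h1 [h2 [h3 /conv_inj [-> ->]]]]]].
by move=> [h1 [h2 h3]]; exists u, v.
Qed.

Lemma FT_exists a : exists c, FT a c.
Proof.
have [c1 [P1 P2]] := lang_props (hmul a).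
have [c2 [P1' _]] := lang_props (regular_swap (hmul a)).
exists (c1 + c2) => u v hr; split; first split.
- case: (leqP (size v) (size u + (c1 + c2))) => // hlt.
  have hl : size u + c1 < size v by lia.
  have [v' [hs hl']] := P1 u v (proj2 (lang_conv a u v) hr) hl.
  move/lang_conv: hl' => hr'.
  have e : v' = v.
    apply: hinj; [exact: hr'.2.1 | exact: hr.2.1 |].
    exact: geq_trans hr'.2.2 (geq_sym hr.2.2).
  by rewrite e ltnn in hs.
- case: (leqP (size u) (size v + (c1 + c2))) => // hlt.
  have hl : size v + c2 < size u by lia.
  have hl0 : (fun y => exists u' v', L u' /\ L v' /\ geqw (psi v') (psi u' ++ [:: (a, true)]) /\ y = conv u' v') (map (@swp _) (conv v u)).
    by rewrite -conv_swap; apply/lang_conv.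
  have [u' [hs hl']] := P1' v u hl0 hl.
  rewrite -conv_swap in hl'; move/lang_conv: hl' => hr'.
  have e : u' = u.
    apply: hinj; [exact: hr'.1 | exact: hr.1 |].
    apply: (@geq_cancelr _ _ [:: (a, true)]).
    exact: geq_trans (geq_sym hr'.2.2) hr.2.2.
  by rewrite e ltnn in hs.
move=> t.
have [z [hz hl]] := P2 u v t (proj2 (lang_conv a u v) hr).
case: hl => [u' [v' [h1 [h2 [h3 h4]]]]].
have [[ru [e1 s1]] [rv [e2 s2]]] := prefix_conv (esym h4).
exists ru, rv; rewrite -e1 -e2; split; first by split.
by split; [apply: leq_trans s1 _ | apply: leq_trans s2 _]; apply: leq_trans hz _; apply: leq_addr.
Qed.

Lemma FT_unif : exists c, forall a, FT a c.
Proof.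
suff : exists c, forall a, a \in enum A -> FT a c.
  by move=> [c h]; exists c => a; apply: h; rewrite mem_enum.
elim: (enum A) => [|a s [c IH]]; first by exists 0.
have [c' h'] := FT_exists a.
exists (c + c') => b; rewrite inE => /orP [/eqP -> | hb].
  by apply: FT_mono h'; lia.
by apply: FT_mono (IH b hb); lia.
Qed.
End FT.

Open Scope nat_scope.

Lemma takeS (T : Type) (s : seq T) t : take t.+1 s = take t s ++ take 1 (drop t s).
Proof. by elim: s t => [|x s IH] [|t] //=; rewrite IH. Qed.

Section Comb.
Variable A : finType.
Variable rels : seq (word A).
Local Notation geqw := (@Defs.geq A rels).
Variable D : nat -> nat.
Hypothesis hD : is_dehn_function rels D.
Variables (L : word A -> Prop) (psi : word A -> word A).
Hypothesis hinj : forall w1 w2, L w1 -> L w2 -> geqw (psi w1) (psi w2) -> w1 = w2.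
Hypothesis hsurj : forall g : word A, exists w, L w /\ geqw (psi w) g.
Variable c : nat.
Hypothesis hFT : forall a, FT rels L psi a c.
Variable r0 : word A.
Hypothesis hr0L : L r0.
Hypothesis hr0 : geqw (psi r0) [::].

Lemma D_mono n m : n <= m -> D n <= D m.
Proof.
move=> hnm; apply: (proj2 (hD n)) => w hw ht.
apply: (proj1 (hD m)) => //; exact: leq_trans hw hnm.
Qed.

Lemma cell n a b : geqw a b -> size a + size b <= n -> aeq rels (D n) a b.
Proof.
move=> h hs; apply: (proj1 (hD n)) => //.
by rewrite size_cat size_winv.
Qed.

Lemma cellP P n a b : geqw a b -> size a + size b <= n -> n <= P -> aeq rels (D P) a b.
Proof. move=> h hs hn; apply: aeq_mono (D_mono hn) (cell h hs). Qed.

Section Conn.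
Variables (T E : nat).
Hypothesis hE : forall w, L w -> size w <= T + c ->
  exists e, geqw (w ++ e) (psi w) /\ size e <= E.

Lemma conn_true a u v : Rel rels L psi a u v -> size u <= T -> size v <= T ->
  forall t, exists cc, size cc <= 2 * c + 2 * E + 1 /\ geqw (take t u ++ cc) (take t v).
Proof.
move=> hr hu hv t.
have [_ h3] := hFT hr.
have [ru [rv [[hL1 [hL2 hg]] [hru hrv]]]] := h3 t.
have s1 : size (take t u ++ ru) <= T + c by rewrite size_cat size_take; case: ifP; lia.
have s2 : size (take t v ++ rv) <= T + c by rewrite size_cat size_take; case: ifP; lia.
have [eu [heu heus]] := hE hL1 s1.
have [ev [hev hevs]] := hE hL2 s2.
exists (ru ++ eu ++ [:: (a, true)] ++ winv ev ++ winv rv); split.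
  rewrite !size_cat !size_winv /=; lia.
have e1 : take t u ++ ru ++ eu ++ [:: (a, true)] ++ winv ev ++ winv rv =
   (((take t u ++ ru) ++ eu) ++ [:: (a, true)]) ++ (winv ev ++ winv rv) by rewrite -!catA.
rewrite e1.
apply: geq_trans (geq_catr _ (geq_catr _ heu)) _.
apply: geq_trans (geq_catr _ (geq_sym hg)) _.
apply: geq_trans (geq_catr _ (geq_sym hev)) _.
apply: geq_fe.
rewrite -!catA.
have := fe_catl (take t v) (fe_invr (rv ++ ev)).
by rewrite winv_cat cats0 -!catA.
Qed.

Lemma rel_of (x : A * bool) r r' : L r -> L r' -> geqw (psi r') (psi r ++ [:: x]) ->
  Rel rels L psi x.1 r r' \/ Rel rels L psi x.1 r' r.
Proof.
case: x => a [] /= hL hL' hg; first by left.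
right; split=> //; split=> //.
have h2 := geq_catr [:: (a, true)] (geq_sym hg).
apply: (geq_trans _ h2); apply: geq_fe.
have := @fs_intro _ (psi r) [::] (a, false); rewrite cats0 /= -catA /= => h.
by apply: rst_sym; apply: rst_step; move: h; rewrite /linv /=.
Qed.

Lemma len_step (x : A * bool) r r' : L r -> L r' -> geqw (psi r') (psi r ++ [:: x]) ->
  size r' <= size r + c.
Proof.
move=> hL hL' hg; case: (rel_of hL hL' hg) => h.
  by have [[h1 _] _] := hFT h.
by have [[_ h1] _] := hFT h.
Qed.

Lemma conn (x : A * bool) r r' : L r -> L r' -> geqw (psi r') (psi r ++ [:: x]) ->
  size r <= T -> size r' <= T ->
  forall t, exists cc, size cc <= 2 * c + 2 * E + 1 /\ geqw (take t r ++ cc) (take t r').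
Proof.
move=> hL hL' hg hr hr' t; case: (rel_of hL hL' hg) => h.
  exact: conn_true h hr hr' t.
have [cc [hs hc]] := conn_true h hr' hr t.
exists (winv cc); split; first by rewrite size_winv.
apply: geq_sym; have h2 := geq_catr (winv cc) hc.
apply: (geq_trans _ h2); apply: geq_fe.
rewrite -catA; have := fe_catl (take t r') (fe_invr cc); rewrite cats0 => h'.
exact: fe_sym h'.
Qed.
End Conn.

Lemma strip P B (u v : word A) : 2 * B + 2 <= P ->
  (forall t, exists cc, size cc <= B /\ geqw (take t u ++ cc) (take t v)) ->
  forall t cc, size cc <= B -> geqw (take t u ++ cc) (take t v) ->
    aeq rels (D P + t * D P) (take t u ++ cc) (take t v).
Proof.
move=> hP hC; elim=> [|t IH] cc' hs hg.
  rewrite !take0 /= in hg *.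
  rewrite addn0; apply: cellP hg _ (leqnn P) => /=; lia.
have [cc [hcs hcg]] := hC t.
have IH' := IH cc hcs hcg.
rewrite (takeS u t) (takeS v t) in hg *.
set a := take 1 (drop t u) in hg *; set b := take 1 (drop t v) in hg *.
have hsa : size a <= 1 by rewrite size_take; case: ifP; lia.
have hsb : size b <= 1 by rewrite size_take; case: ifP; lia.
have hcell : geqw (a ++ cc') (cc ++ b).
  apply: (@geq_cancell _ _ (take t u)).
  rewrite catA; apply: geq_trans hg _; rewrite catA; apply: geq_catr.
  exact: geq_sym.
have h1 : aeq rels (D P) (a ++ cc') (cc ++ b).
  apply: cellP hcell _ (leqnn P); rewrite !size_cat; lia.
have h2 := aeq_catl (take t u) h1.
have h3 := aeq_catr b IH'.
rewrite -catA in h3.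
have h4 := aeq_trans h2 h3.
rewrite -catA; apply: aeq_mono h4; rewrite mulSn; lia.
Qed.

Section Chain.
Variables (n E : nat).
Let T := size r0 + c * n.
Let P := size r0 + 4 * c + 4 * E + 4.
Hypothesis hE : forall w, L w -> size w <= T + c ->
  exists e, geqw (w ++ e) (psi w) /\ size e <= E.

Lemma chain (s : word A) : size s <= n -> exists r e,
  L r /\ geqw (psi r) s /\ size r <= size r0 + c * size s /\ geqw (r ++ e) (psi r) /\
      size e <= E /\ aeq rels ((1 + size s * (T + 2)) * D P) s (r ++ e).
Proof.
elim/last_ind: s => [|s x IH] hs.
  have [e [he hes]] := hE hr0L ltac:(rewrite /T; lia).
  exists r0, e; split=> //; split=> //; split; first by rewrite /= muln0 addn0.
  split=> //; split=> //.
  rewrite /= mul1n; apply: aeq_sym; apply: cellP (geq_trans he hr0) _ (leqnn _) => /=.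
  rewrite size_cat /P; lia.
rewrite size_rcons in hs.
have [r [e [hL [hg [hsr [he [hes ha]]]]]]] := IH ltac:(lia).
have [r' [hL' hg']] := hsurj (rcons s x).
have hg2 : geqw (psi r') (psi r ++ [:: x]).
  apply: geq_trans hg' _; rewrite -cats1; apply: geq_catr; exact: geq_sym.
have hsr' : size r' <= size r0 + c * (size s).+1.
  have := len_step hL hL' hg2; rewrite mulnS; lia.
have hrT : size r <= T.
  apply: leq_trans hsr _; rewrite /T leq_add2l leq_mul2l; apply/orP; right; lia.
have hr'T : size r' <= T.
  apply: leq_trans hsr' _; rewrite /T leq_add2l leq_mul2l; apply/orP; right; lia.
have [e' [he' he's]] := hE hL' ltac:(lia).
have hC := conn hE hL hL' hg2 hrT hr'T.
have [cT [hcs hcg]] := hC T.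
have hstrip := strip (P := P) (B := 2 * c + 2 * E + 1) ltac:(rewrite /P; lia) hC hcs hcg.
rewrite !take_oversize // in hcg hstrip.
exists r', e'; split=> //; split=> //; split; first by rewrite size_rcons.
split=> //; split=> //.
have hcell : geqw (e ++ [:: x]) (cT ++ e').
  apply: (@geq_cancell _ _ r).
  rewrite catA; apply: geq_trans (geq_catr _ he) _.
  apply: geq_trans (geq_sym hg2) _.
  apply: geq_trans (geq_sym he') _.
  rewrite catA; apply: geq_catr; exact: geq_sym.
have c1 : aeq rels (D P) (r ++ e ++ [:: x]) (r ++ cT ++ e').
  apply: aeq_catl; apply: cellP hcell _ (leqnn _).
  rewrite !size_cat /= /P; lia.
have c0 := aeq_catr [:: x] ha; rewrite -catA in c0.
have c2 := aeq_catr e' hstrip; rewrite -catA in c2.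
have := aeq_trans (aeq_trans c0 c1) c2.
rewrite cats1 size_rcons; apply: aeq_mono.
move: (size s) (D P) T => s0 y t0; clear; nia.
Qed.

Lemma comb (w : word A) : size w <= n -> gtrivial rels w ->
  area_le rels w ((2 + n * (T + 2)) * D P).
Proof.
move=> hs ht.
have [r [e [hL [hg [hsr [he [hes ha]]]]]]] := chain hs.
have hw : geqw w [::] by rewrite /Defs.geq /= cats0.
have er : r = r0.
  apply: hinj => //; apply: geq_trans hg _; apply: geq_trans hw (geq_sym hr0).
rewrite er in he ha.
have h2 : aeq rels (D P) (r0 ++ e) [::].
  apply: cellP (geq_trans he hr0) _ (leqnn _); rewrite size_cat /= /P; lia.
have := aeq_trans ha h2; move/aeq_nil; apply: area_mono.
have : size w * (T + 2) <= n * (T + 2) by apply: leq_mul.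
move: (size w * (T + 2)) (n * (T + 2)) (D P) => x0 x1 y; clear; nia.
Qed.
End Chain.
End Comb.

Open Scope R_scope.

Lemma INR_mul a b : INR (a * b)%N = INR a * INR b.
Proof. exact: mult_INR. Qed.
Lemma INR_add a b : INR (a + b)%N = INR a + INR b.
Proof. exact: plus_INR. Qed.
Lemma INR_leq a b : (a <= b)%N -> INR a <= INR b.
Proof. by move/leP; apply: le_INR. Qed.
Lemma INR_leq_inv a b : INR a <= INR b -> (a <= b)%N.
Proof. by move/INR_le/leP. Qed.
Lemma INR_ltn_inv a b : INR a < INR b -> (a < b)%N.
Proof. by move/INR_lt/ltP. Qed.

Lemma nat_above (x : R) : exists k : nat, x <= INR k.
Proof.
have [h1 _] := archimed x.
exists (Z.to_nat (up x)).
case: (Z.le_gt_cases 0 (up x)) => hz.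
  rewrite INR_IZR_INZ Z2Nat.id //; lra.
have : IZR (up x) < 0 by apply: IZR_lt.
have := pos_INR (Z.to_nat (up x)); lra.
Qed.

Lemma ceil_nat (x : R) : 0 <= x -> exists m : nat, INR m - 1 < x /\ x <= INR m.
Proof.
move=> hx; have [k hk] := nat_above x.
elim: k hk => [|k IH] hk.
  by exists 0%N; change (INR 0) with 0 in *; lra.
case: (Rle_lt_dec x (INR k)) => h; first exact: IH.
exists k.+1; rewrite S_INR in hk *; lra.
Qed.

Lemma inF_mono Q (g : nat -> R) a b : inF Q g -> (Q <= a)%N -> (a <= b)%N -> g a <= g b.
Proof. by move=> [h _]; apply: h. Qed.
Lemma inF_pos Q (g : nat -> R) a : inF Q g -> (Q <= a)%N -> 0 <= g a.
Proof. by move=> [_ h]; apply: h. Qed.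

Section Part1.
Variable A : finType.
Variable rels : seq (word A).
Local Notation geqw := (@Defs.geq A rels).
Variable D : nat -> nat.
Hypothesis hD : is_dehn_function rels D.
Variables (f : nat -> R) (Qf : nat).
Hypothesis hf : inF Qf f.
Variables (L : word A -> Prop) (psi : word A -> word A).
Hypothesis hinj : forall w1 w2, L w1 -> L w2 -> geqw (psi w1) (psi w2) -> w1 = w2.
Hypothesis hsurj : forall g : word A, exists w, L w /\ geqw (psi w) g.
Variable c : nat.
Hypothesis hFT : forall a, FT rels L psi a c.
Variable r0 : word A.
Hypothesis hr0L : L r0.
Hypothesis hr0 : geqw (psi r0) [::].
Variables (NB KB MB : nat).
Hypothesis hMB : (0 < MB)%N.
Hypothesis hBb : forall n (w : word A), (NB <= n)%N -> L w -> (size w <= n)%N ->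
        exists u : word A, geqw (w ++ u) (psi w) /\
          Rle (INR (size u)) (Rmult (INR KB) (f (MB * n)%N)).
Variable n0 : nat.
Hypothesis hn0 : (Qf <= n0)%N.
Hypothesis hf0 : 0 < f n0.

Lemma part1 (p q : nat -> R) (Qp Qq : nat) : inF Qp p -> inF Qq q ->
     preceq p (fun n => INR (D n)) -> preceq (fun n => INR (D n)) q ->
     exists (C : R) (K M N : nat), (0 < K)%N /\ (0 < M)%N /\
       forall n : nat, (N <= n)%N ->
         forall m : nat, Rlt (Rminus (INR m) R1) (Rmult (INR K) (f (M * n)%N)) /\ Rle (Rmult (INR K) (f (M * n)%N)) (INR m) ->
           Rle (p n) (Rmult (Rmult C (pow (INR n) 2)) (q m)).
Proof.
move=> hp hq [N1 [K1 [M1 [hK1 [hM1 hp1]]]]] [N2 [K2 [M2 [hK2 [hM2 hq2]]]]].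
have [k0 hk0] := nat_above (/ f n0).
pose c0 := (size r0 + 4 * c + 4)%N.
pose Cst := (M2 * c0 + 4 * M2 + 4 * M2 * (N2 + Qq))%N.
pose K := (4 * M2 * KB + Cst * k0 + 1)%N.
pose M := (MB * (c * M1 + 1))%N.
pose N := (N1 + n0 + NB + Qf + size r0 + c + 1)%N.
pose C0 := (2 + M1 * (size r0 + 2) + c * M1 * M1)%N.
exists (INR K1 * INR C0 * INR K2), K, M, N; split; first by rewrite /K; lia.
split; first by rewrite /M muln_gt0 hMB addn1.
move=> n hn m [hm1 hm2].
set F := f (M * n)%N in hm1 hm2 *.
have hMn : (n <= M * n)%N by rewrite /M; nia.
have hfF : f n0 <= F by apply: (inF_mono hf) => //; rewrite /N in hn; lia.
have hF0 : 0 < F by lra.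
have hk0F : 1 <= INR k0 * F.
  have h1 : / f n0 * f n0 = 1 by field; lra.
  have h2 : 0 <= / f n0 by apply: Rlt_le; apply: Rinv_0_lt_compat.
  nra.
have hmK : INR (4 * M2 * KB) * F + INR Cst + F <= INR m.
  apply: Rle_trans hm2; rewrite /K INR_add INR_add (INR_mul Cst k0).
  have := Rmult_le_compat_l (INR Cst) _ _ (pos_INR Cst) hk0F.
  change (INR 1) with 1; nra.
have hCm : (Cst <= m)%N.
  apply: INR_leq_inv; have := pos_INR (4 * M2 * KB).
  have := Rmult_le_pos _ _ (pos_INR (4 * M2 * KB)) (Rlt_le _ _ hF0); lra.
have hc0m : (M2 * c0 <= m)%N by apply: leq_trans hCm; rewrite /Cst -addnA leq_addr.
pose y := (m - M2 * c0)%N.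
pose E := (y %/ (4 * M2))%N.
have hyR : INR y = INR m - INR (M2 * c0) by rewrite /y minus_INR //; apply/leP.
have hE4 : (E * (4 * M2) <= y)%N by apply: leq_divM.
have hyE : (y < E * (4 * M2) + 4 * M2)%N.
  rewrite {1}(divn_eq y (4 * M2)) ltn_add2l ltn_pmod //; lia.
have eC : INR Cst = INR (M2 * c0) + INR (4 * M2) + INR (4 * M2) * INR (N2 + Qq).
  by rewrite /Cst INR_add INR_add (INR_mul (4 * M2) (N2 + Qq)).
have hE1 : INR (4 * M2) * (INR KB * F + 1 + INR (N2 + Qq)) < INR (4 * M2) * (INR E + 1).
  have h2 : INR y < INR (E * (4 * M2) + 4 * M2) by apply: lt_INR; apply/ltP.
  rewrite INR_add INR_mul in h2.
  rewrite (INR_mul (4 * M2) KB) in hmK.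
  rewrite eC in hmK; nra.
have h4M : 0 < INR (4 * M2) by apply: lt_0_INR; apply/ltP; lia.
have hE2 := Rmult_lt_reg_l _ _ _ h4M hE1.
have hKBF : 0 <= INR KB * F by apply: Rmult_le_pos; [apply: pos_INR | lra].
have hEF : INR KB * F <= INR E by have := pos_INR (N2 + Qq); lra.
have hEN : (N2 + Qq <= E)%N by apply: INR_leq_inv; lra.
have hE : forall w, L w -> (size w <= size r0 + c * (M1 * n) + c)%N ->
    exists e, geqw (w ++ e) (psi w) /\ (size e <= E)%N.
  move=> w hL hs.
  pose n2 := maxn (NB + Qf) (size r0 + c * (M1 * n) + c).
  have hn2 : (n2 <= (c * M1 + 1) * n)%N.
    rewrite geq_max; apply/andP; split.
      apply: (@leq_trans n); first by rewrite /N in hn; lia.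
      by rewrite mulnDl mul1n leq_addl.
    rewrite mulnDl mul1n mulnA; rewrite /N in hn; lia.
  have [u [hu hus]] := @hBb n2 w (leq_trans (leq_addr Qf NB) (leq_maxl _ _)) hL
     (leq_trans hs (leq_maxr _ _)).
  exists u; split=> //; apply: INR_leq_inv.
  apply: Rle_trans hus _; apply: Rle_trans _ hEF.
  apply: Rmult_le_compat_l; first exact: pos_INR.
  apply: (inF_mono hf).
    apply: (@leq_trans n2); first by rewrite /n2; lia.
    by rewrite leq_pmull.
  by rewrite /M -mulnA leq_mul2l hn2 orbT.
have hcomb := comb hD hinj hsurj hFT hr0L hr0 hE.
have hDn := proj2 (hD (M1 * n)%N) _ hcomb.
set P := (size r0 + 4 * c + 4 * E + 4)%N in hDn.
have hn1 : (1 <= n)%N by rewrite /N in hn; lia.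
have hC0 : (2 + M1 * n * (size r0 + c * (M1 * n) + 2) <= C0 * (n * n))%N.
  rewrite /C0; move: (size r0) hn1 => s0 hn1; clear -hn1; nia.
have hMP : (M2 * P <= m)%N.
  have eP : P = (c0 + 4 * E)%N by rewrite /P /c0; lia.
  rewrite eP mulnDr; have : (M2 * (4 * E) = E * (4 * M2))%N by lia.
  move=> ->; rewrite /y in hE4; lia.
have hPN : (N2 <= P)%N by rewrite /P; lia.
have hQP : (Qq <= M2 * P)%N.
  apply: (@leq_trans P); first by rewrite /P; lia.
  by rewrite leq_pmull.
have hDP : INR (D P) <= INR K2 * q m.
  apply: Rle_trans (hq2 P hPN) _.
  apply: Rmult_le_compat_l; first exact: pos_INR.
  exact: (inF_mono hq).
have hDnR : INR (D (M1 * n)%N) <= INR C0 * (INR n * INR n) * INR (D P).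
  rewrite -!INR_mul; apply: INR_leq; apply: leq_trans hDn _.
  by rewrite leq_mul2r hC0 orbT.
have hpn := hp1 n ltac:(rewrite /N in hn; lia).
simpl in hpn.
have hA : 0 <= INR C0 * (INR n * INR n).
  apply: Rmult_le_pos; first exact: pos_INR.
  apply: Rmult_le_pos; exact: pos_INR.
have hB := Rmult_le_compat_l _ _ _ hA hDP.
have hK1' := pos_INR K1.
have hC := Rmult_le_compat_l _ _ _ hK1' (Rle_trans _ _ _ hDnR hB).
have e : INR n ^ 2 = INR n * INR n by simpl; ring.
rewrite e; apply: (Rle_trans _ _ _ (Rle_trans _ _ _ hpn hC)); right; ring.
Qed.
End Part1.

Open Scope R_scope.

Lemma ln_le' a b : 0 < a -> a <= b -> ln a <= ln b.
Proof.
move=> ha [hab|->]; last by right.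
by left; apply: ln_increasing.
Qed.
Lemma exp_le' a b : a <= b -> exp a <= exp b.
Proof. move=> [hab|->]; last by right. by left; apply: exp_increasing. Qed.

Section Parts.
Variables (f : nat -> R) (Qf : nat).
Hypothesis hf : inF Qf f.
Variable n0 : nat.
Hypothesis hn0 : (Qf <= n0)%N.
Hypothesis hf0 : 0 < f n0.

Definition P1concl (p q : nat -> R) :=
     exists (C : R) (K M N : nat), (0 < K)%N /\ (0 < M)%N /\
       forall n : nat, (N <= n)%N ->
         forall m : nat, Rlt (Rminus (INR m) R1) (Rmult (INR K) (f (M * n)%N)) /\ Rle (Rmult (INR K) (f (M * n)%N)) (INR m) ->
           Rle (p n) (Rmult (Rmult C (pow (INR n) 2)) (q m)).

Lemma common (p q : nat -> R) (k0 : nat) : / f n0 <= INR k0 -> P1concl p q ->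
  exists (C : R) (K M N : nat), (0 < K)%N /\ (0 < M)%N /\
   forall n, (N <= n)%N -> exists m : nat,
     [/\ 1 <= INR n, 0 < f (M * n)%N, 1 <= INR k0 * f (M * n)%N,
         INR m <= (INR K + INR k0) * f (M * n)%N /\ 0 < INR m &
         p n <= C * (INR n * INR n) * q m].
Proof.
move=> hk0 [C [K [M [N [hK [hM H]]]]]].
exists C, K, M, (N + n0 + 1)%N; split=> //; split=> // n hn.
have hF : f n0 <= f (M * n)%N.
  apply: (inF_mono hf) => //; apply: (@leq_trans n); first by lia.
  by rewrite leq_pmull.
set F := f (M * n)%N in hF *.
have hF0 : 0 < F by lra.
have hk0F : 1 <= INR k0 * F.
  have h1 : / f n0 * f n0 = 1 by field; lra.
  have h2 : 0 <= / f n0 by apply: Rlt_le; apply: Rinv_0_lt_compat.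
  nra.
have hKp : 0 < INR K by apply: lt_0_INR; apply/ltP.
have hx : 0 <= INR K * F by nra.
have [m [hm1 hm2]] := ceil_nat hx.
exists m; split.
- have : (1 <= n)%N by lia.
  by move/INR_leq; change (INR 1) with 1.
- exact: hF0.
- exact: hk0F.
- split; first by nra.
  nra.
have := H n ltac:(lia) m (conj _ _); rewrite /F in hm1 hm2.
move=> /(_ ltac:(lra) hm2) h.
by move: h; rewrite /= Rmult_1_r.
Qed.

Lemma part2 (d : R) : INR 2 < d ->
  P1concl (fun n => Rpower (INR n) d) (fun n => Rpower (INR n) d) ->
  preceq (fun n => Rpower (INR n) (Rdiv (Rminus d (INR 2)) d)) f.
Proof.
move=> hd H.
have [k0 hk0] := nat_above (/ f n0).
have [C [K [M [N [hK [hM HH]]]]]] := common hk0 H.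
have [K' hK'] := nat_above (exp (ln C / d) * (INR K + INR k0)).
exists N, (K' + 1)%N, M; split; first by lia.
split=> // n hn.
have [m [hn1 hF0 hk0F [hmF hm0] hp]] := HH n hn.
set F := f (M * n)%N in hF0 hk0F hmF *.
have hd0 : 0 < d by change (INR 2) with 2 in hd; lra.
have hn0' : 0 < INR n by lra.
rewrite /Rpower in hp *.
have hC : 0 < C.
  case: (Rle_lt_dec C 0) => // hC.
  have : C * (INR n * INR n) * exp (d * ln (INR m)) <= 0.
    have := exp_pos (d * ln (INR m)); have : 0 < INR n * INR n by nra.
    move=> h1 h2; have : C * (INR n * INR n) <= 0 by nra.
    nra.
  have := exp_pos (d * ln (INR n)); lra.
have hl := ln_le' (exp_pos _) hp.
rewrite ln_exp !ln_mult ?ln_exp in hl; try nra; try apply: exp_pos.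
(* hl : d * ln n <= ln C + (ln n + ln n) + d * ln m *)
have hl2 : (d - INR 2) / d * ln (INR n) <= ln C / d + ln (INR m).
  change (INR 2) with 2.
  apply: (Rmult_le_reg_l d) => //.
  have e1 : d * ((d - 2) / d * ln (INR n)) = d * ln (INR n) - 2 * ln (INR n) by field; lra.
  have e2 : d * (ln C / d + ln (INR m)) = ln C + d * ln (INR m) by field; lra.
  rewrite e1 e2; lra.
apply: Rle_trans (exp_le' hl2) _.
rewrite exp_plus exp_ln //.
have hec := exp_pos (ln C / d).
apply: Rle_trans (_ : exp (ln C / d) * ((INR K + INR k0) * F) <= _).
  by apply: Rmult_le_compat_l; lra.
rewrite -Rmult_assoc; apply: Rmult_le_compat_r; first lra.
rewrite INR_add; change (INR 1) with 1; lra.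
have : 0 < INR n * INR n by nra.
nra.
Qed.

Lemma part3 :
  P1concl (fun n => exp (INR n)) (fun n => exp (INR n)) ->
  preceq (fun n => INR n) f.
Proof.
move=> H.
have [k0 hk0] := nat_above (/ f n0).
have [C [K [M [N [hK [hM HH]]]]]] := common hk0 H.
have [N3 hN3] := nat_above (216 * C).
exists (N + N3)%N, (2 * (K + k0))%N, M; split; first by lia.
split=> // n hn.
have [m [hn1 hF0 hk0F [hmF hm0] hp]] := HH n ltac:(lia).
set F := f (M * n)%N in hF0 hk0F hmF *.
have hnN3 : INR N3 <= INR n by apply: INR_leq; lia.
have h2m : INR n <= 2 * INR m.
  case: (Rle_lt_dec (INR n) (2 * INR m)) => // hlt.
  exfalso.
  set x := INR n in hn1 hnN3 hlt hp *.
  have e6 : exp (x / 2) = exp (x / 6) * exp (x / 6) * exp (x / 6).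
    by rewrite -!exp_plus; congr exp; field.
  have ex : exp x = exp (x / 2) * exp (x / 2).
    by rewrite -exp_plus; congr exp; field.
  have hm : exp (INR m) < exp (x / 2) by apply: exp_increasing; lra.
  have h6 := exp_ineq1_le (x / 6).
  have hp6 : 0 < exp (x / 6) := exp_pos _.
  have hp2 : 0 < exp (x / 2) := exp_pos _.
  have hCp : 0 < C.
    case: (Rle_lt_dec C 0) => // hC.
    have : C * (x * x) * exp (INR m) <= 0.
      have := exp_pos (INR m); have : 0 < x * x by nra.
      move=> h1 h2; have : C * (x * x) <= 0 by nra.
      nra.
    have := exp_pos x; lra.
  have h1 : exp x < C * (x * x) * exp (x / 2).
    apply: Rle_lt_trans hp _; apply: Rmult_lt_compat_l => //; apply: Rmult_lt_0_compat => //; nra.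
  rewrite ex in h1.
  have h2 : exp (x / 2) < C * (x * x) by nra.
  have h3 : (x / 6) * (x / 6) * (x / 6) <= exp (x / 2).
    rewrite e6.
    have : 0 <= x / 6 by lra.
    move=> h0.
    have : x / 6 <= exp (x / 6) by lra.
    move=> h7.
    have h8 : x / 6 * (x / 6) <= exp (x / 6) * exp (x / 6) by apply: Rmult_le_compat.
    apply: Rmult_le_compat => //; nra.
  nra.
apply: Rle_trans h2m _.
rewrite INR_mul INR_add; change (INR 2) with 2.
lra.
Qed.
End Parts.

Lemma inF_rpow (d : R) : Rlt R0 d -> inF 1 (fun n => Rpower (INR n) d).
Proof.
move=> hd; split.
  move=> a b ha hab; rewrite /Rpower; apply: exp_le'.
  apply: Rmult_le_compat_l; first by apply: Rlt_le.
  apply: ln_le'; last exact: INR_leq.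
  by apply: lt_0_INR; apply/ltP.
move=> n _; apply: Rlt_le; exact: exp_pos.
Qed.

Lemma inF_exp : inF 0 (fun n => exp (INR n)).
Proof.
split; first by move=> a b _ hab; apply: exp_le'; exact: INR_leq.
by move=> n _; apply: Rlt_le; exact: exp_pos.
Qed.

Unset Implicit Arguments.
Close Scope R_scope.
Open Scope nat_scope.

Theorem mainTheorem2 (A : finType) (rels : seq (word A)) (D : nat -> nat)
  (hD : is_dehn_function rels D) (f : nat -> R) (Qf : nat) (hf : inF Qf f)
  (hnz : exists n, (Qf <= n)%N /\ f n <> R0) (hB : in_B rels f) :
  (forall (p q : nat -> R) (Qp Qq : nat), inF Qp p -> inF Qq q ->
     preceq p (fun n => INR (D n)) -> preceq (fun n => INR (D n)) q ->
     exists (C : R) (K M N : nat), (0 < K)%N /\ (0 < M)%N /\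
       forall n : nat, (N <= n)%N ->
         forall m : nat, Rlt (Rminus (INR m) R1) (Rmult (INR K) (f (M * n))) /\ Rle (Rmult (INR K) (f (M * n))) (INR m) ->
           Rle (p n) (Rmult (Rmult C (pow (INR n) 2)) (q m))) /\
  (forall d : R, Rlt (INR 2) d ->
     preceq (fun n => Rpower (INR n) d) (fun n => INR (D n)) ->
     preceq (fun n => INR (D n)) (fun n => Rpower (INR n) d) ->
     preceq (fun n => Rpower (INR n) (Rdiv (Rminus d (INR 2)) d)) f) /\
  (preceq (fun n => exp (INR n)) (fun n => INR (D n)) ->
   preceq (fun n => INR (D n)) (fun n => exp (INR n)) ->
   preceq (fun n => INR n) f).
Proof.
move: hB => [L [psi [[_ [hinj [hsurj hmul]]] [NB [KB [MB [hKB [hMB hBb]]]]]]]].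
have [c hFT] := FT_unif hinj hmul.
have [r0 [hr0L hr0]] := hsurj [::].
move: hnz => [n0 [hn0 hnz0]].
have hf0 : Rlt R0 (f n0).
  have := (proj2 hf) n0 hn0; move=> h; case: (Rle_lt_or_eq_dec _ _ h) => // h'.
  by rewrite h' in hnz0.
have P1all := part1 hD hf hinj hsurj hFT hr0L hr0 hMB hBb hn0 hf0.
split; first exact: P1all.
split.
  move=> d hd h1 h2.
  have hd0 : Rlt R0 d by apply: Rlt_trans hd; apply: lt_0_INR; apply/ltP.
  exact: (part2 hf hn0 hf0 hd (P1all _ _ _ _ (inF_rpow hd0) (inF_rpow hd0) h1 h2)).
move=> h1 h2.
exact: (part3 hf hn0 hf0 (P1all _ _ _ _ inF_exp inF_exp h1 h2)).
Qed.
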